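(* In the setting of the context, let $(x_0,y_0)\in\mathcal D^+_{\bar y}$, let $T_0=T(x_0,y_0)$ and $T_1=T_0+\dfrac{h(x_0,y_0)-\bar x}{\gamma\bar y}$. Define $\tilde x(t)=h(x_0,y_0)-\gamma(t-T_0)\bar y$ and the control $$u^*(t)=\begin{cases}0 & \text{if } t<T_0 \text{ or } t>T_1,\\ \rho(\tilde x(t),\bar y) & \text{if } T_0\le t\le T_1.\end{cases}$$ Let $(x^*(t),y^*(t))$ be the solution of the controlled CBF-SIR model with initial condition $(x_0,y_0)$ under $u^*$. Then: (i) for $T_0<t<T_1$, $x^*(t)=h(x_0,y_0)-\gamma(t-T_0)\bar y$ and $y^*(t)=\bar y$; (ii) $u^*(t)=\mu(x^*(t),y^*(t))$ for every $t\ge0$, where $\mu(x,y)=0$ if $y<\bar y$ and $\mu(x,\bar y)=[\rho(x,\bar y)]_+$; (iii) $u^*$ is feasible, i.e. $y^*(t)\le\bar y$ for all $t\ge0$; (iv) $J(u^* )=\displaystyle\int_0^{\infty}u^*(t)\,dt=\frac{1}{\gamma\bar y}\int_{\bar x}^{h(x_0,y_0)}\rho(x,\bar y)\,dx.$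
   Context: $\mathcal S=\{(x,y)\in\mathbb R^2_+: x+y\le1\}$, $\gamma>0$, $\beta:\mathcal S\to(0,\infty)$ of class $\mathcal C^2$, $R(x,y)=\frac1\gamma\beta(x,y)x$, and for $x>0$, $\rho(x,y)=\frac{R(x,y)-1}{R(x,y)}=1-\frac{\gamma}{x\beta(x,y)}$; $[a]_+=\max\{a,0\}$. Assumption 1 holds: $x\beta_x+\beta>0$ and $\beta_y\le0$ on $\mathcal S$. Controlled CBF-SIR model: $\dot x=-(1-u(t))\gamma R(x,y)y$, $\dot y=\gamma((1-u(t))R(x,y)-1)y$ (solutions continuous, piecewise-$\mathcal C^1$, in $\mathcal S$); uncontrolled model: $u\equiv0$, with flow $\phi(t,x_0,y_0)$; $\Gamma^+(x_0,y_0)=\{\phi(t,x_0,y_0):t\ge0\}$, $\Gamma^-(x,y)=\{(x_0,y_0)\in\mathcal S:(x,y)\in\Gamma^+(x_0,y_0)\}$. Assume $\beta(1,0)>\gamma$; $\tilde y\in(0,1)$ is the unique number with $R(1-\tilde y,\tilde y)=1$, $\kappa:[0,\tilde y]\to[0,1]$ the $\mathcal C^1$ function with $\{R=1\}\cap\mathcal S=\{(\kappa(y),y):y\in[0,\tilde y]\}$. Fix $\bar y\in(0,\tilde y)$ and $\bar x=\kappa(\bar y)$. There are $\hat y\in[0,\bar y]$ and a $\mathcal C^1$ strictly decreasing $\lambda:[\hat y,\bar y]\to[\bar x,1]$ with $\lambda(\bar y)=\bar x$ and $\overline{\Gamma^-(\bar x,\bar y)}=\{(\lambda(y),y):\hat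 y\le y\le\bar y\}$. $\mathcal D_{\bar y}=\{(x,y)\in\mathcal S:0<y\le\bar y\}$, $\mathcal D^+_{\bar y}=\{(x,y)\in\mathcal D_{\bar y}: y\in[\hat y,\bar y],\ x>\lambda(y)\}$, $\mathcal J=\{(x,\bar y)\in\mathcal S:\bar x<x\le1-\bar y\}$. For $(x,y)\in\mathcal D^+_{\bar y}$, $T(x,y)$ is the (finite) first time $t\ge0$ with $\phi(t,x,y)\in\mathcal J$ and $h(x,y)$ is the first coordinate of $\phi(T(x,y),x,y)$. A control is feasible if the corresponding solution satisfies $y(t)\le\bar y$ for all $t\ge0$. *)

(* Defs.v *)
From Stdlib Require Import Reals Lra List.
From Coquelicot Require Import Coquelicot.
Open Scope R_scope.

Definition inS (x y : R) : Prop := 0 <= x /\ 0 <= y /\ x + y <= 1.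

Definition Rrep (gamma : R) (beta : R -> R -> R) (x y : R) : R :=
  / gamma * beta x y * x.

(* rho(x,y) = 1 - gamma / (x beta(x,y))  (used only for x > 0) *)
Definition rho (gamma : R) (beta : R -> R -> R) (x y : R) : R :=
  1 - gamma / (x * beta x y).

Definition posp (a : R) : R := Rmax a 0.

Definition partial_x (f : R -> R -> R) (x y : R) : R := Derive (fun s => f s y) x.
Definition partial_y (f : R -> R -> R) (x y : R) : R := Derive (fun s => f x s) y.

Definition C1_on (U : R * R -> Prop) (f : R -> R -> R) : Prop :=
  forall p : R * R, U p ->
    continuous (fun q : R * R => f (fst q) (snd q)) p /\
    ex_derive (fun s => f s (snd p)) (fst p) /\
    ex_derive (fun s => f (fst p) s) (snd p) /\
    continuous (fun q : R * R => partial_x f (fst q) (snd q)) p /\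
    continuous (fun q : R * R => partial_y f (fst q) (snd q)) p.

Definition C2_on (U : R * R -> Prop) (f : R -> R -> R) : Prop :=
  C1_on U f /\ C1_on U (partial_x f) /\ C1_on U (partial_y f).

(* beta is of class C^2 on S: C^2 on an open neighbourhood of S *)
Definition C2_on_S (f : R -> R -> R) : Prop :=
  exists U : R * R -> Prop, open U /\ (forall x y, inS x y -> U (x, y)) /\ C2_on U f.

Definition assumption1 (beta : R -> R -> R) : Prop :=
  forall x y, inS x y ->
    x * partial_x beta x y + beta x y > 0 /\ partial_y beta x y <= 0.

(* (x,y) : [0,oo) -> S is a solution of the controlled CBF-SIR model with control u
   and initial condition (x0,y0): continuous on [0,oo), piecewise C^1 (the ODE holds
   at every t > 0 outside a finite set of times), with values in S. *)
Definition is_solution (gamma : R) (beta : R -> R -> R) (u : R -> R)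
    (x y : R -> R) (x0 y0 : R) : Prop :=
  x 0 = x0 /\ y 0 = y0 /\
  (forall t, 0 <= t -> inS (x t) (y t)) /\
  filterlim x (at_right 0) (locally x0) /\
  filterlim y (at_right 0) (locally y0) /\
  (forall t, 0 < t -> continuous x t /\ continuous y t) /\
  exists l : list R, forall t, 0 < t -> ~ In t l ->
    is_derive x t (- (1 - u t) * gamma * Rrep gamma beta (x t) (y t) * y t) /\
    is_derive y t (gamma * ((1 - u t) * Rrep gamma beta (x t) (y t) - 1) * y t).

Definition is_flow (gamma : R) (beta : R -> R -> R) (phi : R -> R * R -> R * R) : Prop :=
  forall x y, inS x y ->
    is_solution gamma beta (fun _ => 0)
      (fun t => fst (phi t (x, y))) (fun t => snd (phi t (x, y))) x y.

Definition Gminus (phi : R -> R * R -> R * R) (x y : R) (p : R * R) : Prop :=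
  inS (fst p) (snd p) /\ exists t, 0 <= t /\ phi t p = (x, y).

Definition closure2 (A : R * R -> Prop) (p : R * R) : Prop :=
  forall eps, 0 < eps -> exists q, A q /\
    Rabs (fst q - fst p) < eps /\ Rabs (snd q - snd p) < eps.

Definition inDplus (ybar yhat : R) (lam : R -> R) (x y : R) : Prop :=
  inS x y /\ 0 < y <= ybar /\ yhat <= y <= ybar /\ x > lam y.

Definition inJ (xbar ybar : R) (p : R * R) : Prop :=
  inS (fst p) (snd p) /\ snd p = ybar /\ xbar < fst p <= 1 - ybar.

Definition Tone (gamma xbar ybar T0 h0 : R) : R := T0 + (h0 - xbar) / (gamma * ybar).

Definition xtilde (gamma ybar T0 h0 t : R) : R := h0 - gamma * (t - T0) * ybar.

Definition ustar (gamma : R) (beta : R -> R -> R) (xbar ybar T0 h0 : R) (t : R) : R :=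
  if Rlt_dec t T0 then 0
  else if Rlt_dec (Tone gamma xbar ybar T0 h0) t then 0
  else rho gamma beta (xtilde gamma ybar T0 h0 t) ybar.

(* mu(x,y) = 0 if y < ybar, [rho(x,ybar)]_+ if y = ybar
   (the value for y > ybar is irrelevant: feasibility is asserted separately) *)
Definition mu (gamma : R) (beta : R -> R -> R) (ybar x y : R) : R :=
  if Rlt_dec y ybar then 0 else posp (rho gamma beta x ybar).

(* Main.v *)
Require Import Defs.
From Stdlib Require Import Reals Lra List Classical.
From Coquelicot Require Import Coquelicot.
Open Scope R_scope.


Lemma MVT_open (f : R -> R) a b : a < b -> (forall c, a < c < b -> ex_derive f c) ->
  (forall c, a <= c <= b -> continuity_pt f c) ->
  exists c, a < c < b /\ f b - f a = Derive f c * (b - a).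
Proof.
  intros Hab Hd Hc.
  assert (pr1 : forall c, a < c < b -> derivable_pt f c).
  { intros c Hc'. apply ex_derive_Reals_0. apply Hd; auto. }
  assert (pr2 : forall c, a < c < b -> derivable_pt id c).
  { intros c _. apply derivable_pt_id. }
  destruct (MVT f id a b pr1 pr2 Hab Hc) as [c [P HP]].
  { intros c _. apply derivable_continuous_pt, derivable_pt_id. }
  exists c; split; auto.
  assert (E1 : derive_pt id c (pr2 c P) = 1).
  { apply derive_pt_eq_0. apply derivable_pt_lim_id. }
  rewrite E1, Derive_Reals in HP. unfold id in HP. lra.
Qed.

Lemma pw_le (g : R -> R) (K : R) (l : list R) : forall a b, a <= b ->
  (forall t, a <= t <= b -> continuity_pt g t) ->
  (forall t, a < t < b -> ~ In t l -> exists d, is_derive g t d /\ d <= K) ->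
  g b - g a <= K * (b - a).
Proof.
  induction l as [|p l IH]; intros a b Hab Hc Hd.
  - destruct (Req_dec a b) as [->|Hne]; [lra|].
    destruct (MVT_open g a b) as [c [Hc1 Hc2]]; try lra; auto.
    + intros c Hc'. destruct (Hd c Hc' (fun h => h)) as [d [Hd1 _]]. exists d; auto.
    + destruct (Hd c Hc1 (fun h => h)) as [d [Hd1 Hd2]].
      rewrite (is_derive_unique _ _ _ Hd1) in Hc2. rewrite Hc2.
      apply Rmult_le_compat_r; lra.
  - destruct (Rlt_dec a p) as [Hap|Hap]; [destruct (Rlt_dec p b) as [Hpb|Hpb]|].
    + assert (H1 : g p - g a <= K * (p - a)).
      { apply IH; try lra. intros; apply Hc; lra.
        intros t Ht Hn. apply Hd; [lra|]. intros [E|E]; [lra|tauto]. }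
      assert (H2 : g b - g p <= K * (b - p)).
      { apply IH; try lra. intros; apply Hc; lra.
        intros t Ht Hn. apply Hd; [lra|]. intros [E|E]; [lra|tauto]. }
      lra.
    + apply IH; auto. intros t Ht Hn. apply Hd; auto. intros [E|E]; [lra|tauto].
    + apply IH; auto. intros t Ht Hn. apply Hd; auto. intros [E|E]; [lra|tauto].
Qed.

Lemma pw_lt (g : R -> R) (K : R) (l : list R) : forall a b, a < b ->
  (forall t, a <= t <= b -> continuity_pt g t) ->
  (forall t, a < t < b -> ~ In t l -> exists d, is_derive g t d /\ d < K) ->
  g b - g a < K * (b - a).
Proof.
  induction l as [|p l IH]; intros a b Hab Hc Hd.
  - destruct (MVT_open g a b) as [c [Hc1 Hc2]]; try lra; auto.
    + intros c Hc'. destruct (Hd c Hc' (fun h => h)) as [d [Hd1 _]]. exists d; auto.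
    + destruct (Hd c Hc1 (fun h => h)) as [d [Hd1 Hd2]].
      rewrite (is_derive_unique _ _ _ Hd1) in Hc2. rewrite Hc2.
      apply Rmult_lt_compat_r; lra.
  - destruct (Rlt_dec a p) as [Hap|Hap]; [destruct (Rlt_dec p b) as [Hpb|Hpb]|].
    + assert (H1 : g p - g a < K * (p - a)).
      { apply IH; try lra. intros; apply Hc; lra.
        intros t Ht Hn. apply Hd; [lra|]. intros [E|E]; [lra|tauto]. }
      assert (H2 : g b - g p < K * (b - p)).
      { apply IH; try lra. intros; apply Hc; lra.
        intros t Ht Hn. apply Hd; [lra|]. intros [E|E]; [lra|tauto]. }
      lra.
    + apply IH; auto. intros t Ht Hn. apply Hd; auto. intros [E|E]; [lra|tauto].
    + apply IH; auto. intros t Ht Hn. apply Hd; auto. intros [E|E]; [lra|tauto].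
Qed.

Lemma pw_abs (g : R -> R) (K : R) (l : list R) a b : a <= b ->
  (forall t, a <= t <= b -> continuity_pt g t) ->
  (forall t, a < t < b -> ~ In t l -> exists d, is_derive g t d /\ Rabs d <= K) ->
  Rabs (g b - g a) <= K * (b - a).
Proof.
  intros Hab Hc Hd.
  assert (H1 : g b - g a <= K * (b - a)).
  { apply (pw_le g K l); auto. intros t Ht Hn. destruct (Hd t Ht Hn) as [d [H1 H2]].
    exists d; split; auto. apply Rle_trans with (Rabs d); auto; apply Rle_abs. }
  assert (H2 : (fun t => - g t) b - (fun t => - g t) a <= K * (b - a)).
  { apply (pw_le (fun t => - g t) K l); auto.
    intros t Ht. apply (continuity_pt_opp g t). auto.
    intros t Ht Hn. destruct (Hd t Ht Hn) as [d [H3 H4]].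
    exists (- d); split. apply (is_derive_opp g t d H3).
    apply Rle_trans with (Rabs d); [|exact H4]. rewrite <- Rabs_Ropp. apply Rle_abs. }
  simpl in H2. apply Rabs_le. lra.
Qed.


Lemma ballR (x e y : R) : ball x e y <-> Rabs (y - x) < e.
Proof. reflexivity. Qed.

Lemma eps_cont (f : R -> R) t :
  (forall eps, 0 < eps -> exists d, 0 < d /\ forall z, Rabs (z - t) < d -> Rabs (f z - f t) < eps) ->
  continuity_pt f t.
Proof.
  intros H. apply continuity_pt_filterlim. apply filterlim_locally. intros eps.
  destruct (H eps (cond_pos eps)) as [d [Hd Hz]].
  exists (mkposreal d Hd). intros z Hz'. apply Hz. apply Hz'.
Qed.

Lemma clamp_cont (x : R -> R) :
  filterlim x (at_right 0) (locally (x 0)) -> (forall t, 0 < t -> continuous x t) ->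
  forall t, continuity_pt (fun s => x (Rmax 0 s)) t.
Proof.
  intros Hr Hc t. apply eps_cont. intros eps He.
  destruct (Rtotal_order t 0) as [Ht|[Ht|Ht]].
  - exists (- t). split; [lra|]. intros z Hz.
    rewrite !Rmax_left; [|lra|]. rewrite Rminus_diag, Rabs_R0; lra.
    apply Rabs_lt_between in Hz. lra.
  - subst t. destruct (proj1 (filterlim_locally x (x 0)) Hr (mkposreal eps He)) as [d Hd].
    exists d. split; [apply cond_pos|]. intros z Hz.
    rewrite (Rmax_left 0 0) by lra.
    destruct (Rle_dec z 0) as [Hz0|Hz0].
    + rewrite Rmax_left by lra. rewrite Rminus_diag, Rabs_R0; lra.
    + rewrite Rmax_right by lra. apply (Hd z); [|lra]. apply ballR. exact Hz.
  - destruct (proj1 (filterlim_locally x (x t)) (Hc t Ht) (mkposreal eps He)) as [d Hd].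
    exists (Rmin d t). split. apply Rmin_pos; [apply cond_pos|lra]. intros z Hz.
    assert (Hz1 : Rabs (z - t) < d) by (apply Rlt_le_trans with (Rmin d t); auto; apply Rmin_l).
    assert (Hz2 : Rabs (z - t) < t) by (apply Rlt_le_trans with (Rmin d t); auto; apply Rmin_r).
    apply Rabs_lt_between in Hz2.
    rewrite !Rmax_right by lra. apply (Hd z). exact Hz1.
Qed.


Lemma cont2_eps (g : R * R -> R) p : continuous g p -> forall eps, 0 < eps ->
  exists d, 0 < d /\ forall q, Rabs (fst q - fst p) < d -> Rabs (snd q - snd p) < d ->
    Rabs (g q - g p) < eps.
Proof.
  intros Hc eps He.
  destruct (proj1 (filterlim_locally g (g p)) Hc (mkposreal eps He)) as [d Hd].
  exists d; split; [apply cond_pos|]. intros q H1 H2. apply (Hd q). split; assumption.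
Qed.

Lemma open_box (U : R * R -> Prop) p : open U -> U p ->
  exists d, 0 < d /\ forall q, Rabs (fst q - fst p) < d -> Rabs (snd q - snd p) < d -> U q.
Proof.
  intros Ho Hp. destruct (Ho p Hp) as [d Hd].
  exists d; split; [apply cond_pos|]. intros q H1 H2. apply Hd. split; assumption.
Qed.

Lemma mvt_bound (h : R -> R) a b K :
  (forall s, Rmin a b <= s <= Rmax a b -> ex_derive h s /\ Rabs (Derive h s) <= K) ->
  Rabs (h a - h b) <= K * Rabs (a - b).
Proof.
  intros H.
  destruct (MVT_gen h b a (Derive h)) as [c [Hc1 Hc2]].
  - intros x Hx. apply Derive_correct. apply H. rewrite Rmin_comm, Rmax_comm in Hx. lra.
  - intros x Hx. apply (proj2 (continuity_pt_filterlim h x)). apply (ex_derive_continuous h x). apply H.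
    rewrite Rmin_comm, Rmax_comm in Hx. lra.
  - rewrite Hc2, Rabs_mult. apply Rmult_le_compat_r; [apply Rabs_pos|].
    apply H. rewrite Rmin_comm, Rmax_comm in Hc1. lra.
Qed.

Lemma between_box s a b c r : Rmin a b <= s <= Rmax a b -> Rabs (a - c) < r -> Rabs (b - c) < r ->
  Rabs (s - c) < r.
Proof.
  intros Hs Ha Hb. apply Rabs_lt_between in Ha. apply Rabs_lt_between in Hb.
  apply Rabs_lt_between. unfold Rmin, Rmax in Hs.
  destruct (Rle_dec a b); lra.
Qed.

Definition Bf (beta : R -> R -> R) (x y : R) := beta x y * x * y.

Lemma loc_lip (beta : R -> R -> R) (U : R * R -> Prop) p :
  open U -> C1_on U beta -> U p ->
  exists r L, 0 < r /\ 0 <= L /\ forall x y x' y',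
    Rabs (x - fst p) < r -> Rabs (y - snd p) < r ->
    Rabs (x' - fst p) < r -> Rabs (y' - snd p) < r ->
    Rabs (Bf beta x y - Bf beta x' y') <= L * (Rabs (x - x') + Rabs (y - y')).
Proof.
  intros Ho HC Hp.
  destruct (open_box U p Ho Hp) as [d0 [Hd0 HU]].
  destruct (HC p Hp) as [Hcb [_ [_ [Hcx Hcy]]]].
  destruct (cont2_eps _ p Hcb 1 Rlt_0_1) as [d1 [Hd1 Hb1]].
  destruct (cont2_eps _ p Hcx 1 Rlt_0_1) as [d2 [Hd2 Hb2]].
  destruct (cont2_eps _ p Hcy 1 Rlt_0_1) as [d3 [Hd3 Hb3]].
  set (r := Rmin (Rmin d0 d1) (Rmin d2 d3)).
  assert (Hr : 0 < r) by (unfold r; repeat apply Rmin_pos; auto).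
  assert (Hr0 : r <= d0) by (unfold r; eapply Rle_trans; [apply Rmin_l|apply Rmin_l]).
  assert (Hr1 : r <= d1) by (unfold r; eapply Rle_trans; [apply Rmin_l|apply Rmin_r]).
  assert (Hr2 : r <= d2) by (unfold r; eapply Rle_trans; [apply Rmin_r|apply Rmin_l]).
  assert (Hr3 : r <= d3) by (unfold r; eapply Rle_trans; [apply Rmin_r|apply Rmin_r]).
  set (Kx := Rabs (partial_x beta (fst p) (snd p)) + 1).
  set (Ky := Rabs (partial_y beta (fst p) (snd p)) + 1).
  set (A := Rabs (fst p) + r).
  set (Bb := Rabs (snd p) + r).
  set (C := Rabs (beta (fst p) (snd p)) + 1).
  assert (HKx : 0 <= Kx) by (unfold Kx; generalize (Rabs_pos (partial_x beta (fst p) (snd p))); lra).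
  assert (HKy : 0 <= Ky) by (unfold Ky; generalize (Rabs_pos (partial_y beta (fst p) (snd p))); lra).
  assert (HA : 0 <= A) by (unfold A; generalize (Rabs_pos (fst p)); lra).
  assert (HB : 0 <= Bb) by (unfold Bb; generalize (Rabs_pos (snd p)); lra).
  assert (HC0 : 0 <= C) by (unfold C; generalize (Rabs_pos (beta (fst p) (snd p))); lra).
  exists r, ((Kx + Ky) * A * Bb + C * (A + Bb)). split; [exact Hr|]. split.
  { apply Rplus_le_le_0_compat; [|apply Rmult_le_pos; lra].
    repeat apply Rmult_le_pos; lra. }
  intros x y x' y' Hx Hy Hx' Hy'.
  assert (Hbl : Rabs (beta x y - beta x' y') <= Kx * Rabs (x - x') + Ky * Rabs (y - y')).
  { replace (beta x y - beta x' y') with ((beta x y - beta x' y) + (beta x' y - beta x' y')) by ring.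
    eapply Rle_trans; [apply Rabs_triang|]. apply Rplus_le_compat.
    - apply (mvt_bound (fun s => beta s y)). intros s Hs.
      assert (Hs' : Rabs (s - fst p) < r) by (eapply between_box; eauto).
      split.
      + destruct (HC (s, y)) as [_ [Hd _]]; [apply HU; simpl; lra|]. exact Hd.
      + assert (E := Hb2 (s, y)). simpl in E.
        change (Derive (fun s0 => beta s0 y) s) with (partial_x beta s y).
        assert (Rabs (partial_x beta s y - partial_x beta (fst p) (snd p)) < 1) by (apply E; lra).
        unfold Kx. generalize (Rabs_triang_inv (partial_x beta s y) (partial_x beta (fst p) (snd p))). lra.
    - apply (mvt_bound (fun s => beta x' s)). intros s Hs.
      assert (Hs' : Rabs (s - snd p) < r) by (eapply between_box; eauto).
      split.
      + destruct (HC (x', s)) as [_ [_ [Hd _]]]; [apply HU; simpl; lra|]. exact Hd.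
      + assert (E := Hb3 (x', s)). simpl in E.
        change (Derive (fun s0 => beta x' s0) s) with (partial_y beta x' s).
        assert (Rabs (partial_y beta x' s - partial_y beta (fst p) (snd p)) < 1) by (apply E; lra).
        unfold Ky. generalize (Rabs_triang_inv (partial_y beta x' s) (partial_y beta (fst p) (snd p))). lra. }
  assert (Hb2' : Rabs (beta x' y') <= C).
  { assert (E := Hb1 (x', y')). simpl in E.
    assert (Rabs (beta x' y' - beta (fst p) (snd p)) < 1) by (apply E; lra).
    unfold C. generalize (Rabs_triang_inv (beta x' y') (beta (fst p) (snd p))). lra. }
  assert (HxA : Rabs x <= A).
  { unfold A. replace x with ((x - fst p) + fst p) by ring.
    eapply Rle_trans; [apply Rabs_triang|]. lra. }
  assert (HyB : Rabs y <= Bb).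
  { unfold Bb. replace y with ((y - snd p) + snd p) by ring.
    eapply Rle_trans; [apply Rabs_triang|]. lra. }
  assert (Hy'B : Rabs y' <= Bb).
  { unfold Bb. replace y' with ((y' - snd p) + snd p) by ring.
    eapply Rle_trans; [apply Rabs_triang|]. lra. }
  unfold Bf.
  replace (beta x y * x * y - beta x' y' * x' * y') with
    ((beta x y - beta x' y') * (x * y) + beta x' y' * (x * (y - y') + y' * (x - x'))) by ring.
  set (dx := Rabs (x - x')). set (dy := Rabs (y - y')).
  assert (Hdx : 0 <= dx) by apply Rabs_pos. assert (Hdy : 0 <= dy) by apply Rabs_pos.
  eapply Rle_trans; [apply Rabs_triang|]. rewrite !Rabs_mult.
  assert (T1 : Rabs (beta x y - beta x' y') * (Rabs x * Rabs y) <= (Kx * dx + Ky * dy) * (A * Bb)).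
  { apply Rmult_le_compat; try apply Rabs_pos; auto.
    apply Rmult_le_pos; apply Rabs_pos. apply Rmult_le_compat; try apply Rabs_pos; auto. }
  assert (T2 : Rabs (x * (y - y') + y' * (x - x')) <= A * dy + Bb * dx).
  { eapply Rle_trans; [apply Rabs_triang|]. rewrite !Rabs_mult. fold dx dy.
    apply Rplus_le_compat; apply Rmult_le_compat; try apply Rabs_pos; auto; lra. }
  assert (T3 : Rabs (beta x' y') * Rabs (x * (y - y') + y' * (x - x')) <= C * (A * dy + Bb * dx)).
  { apply Rmult_le_compat; try apply Rabs_pos; auto. }
  assert (T4 : (Kx * dx + Ky * dy) * (A * Bb) <= (Kx + Ky) * A * Bb * (dx + dy)).
  { assert (0 <= A * Bb) by (apply Rmult_le_pos; auto).
    replace ((Kx + Ky) * A * Bb * (dx + dy)) with ((Kx * dx + Ky * dy + (Kx * dy + Ky * dx)) * (A * Bb)) by ring.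
    apply Rmult_le_compat_r; auto. assert (0 <= Kx * dy + Ky * dx) by (apply Rplus_le_le_0_compat; apply Rmult_le_pos; auto). lra. }
  assert (T5 : C * (A * dy + Bb * dx) <= C * (A + Bb) * (dx + dy)).
  { replace (C * (A + Bb) * (dx + dy)) with (C * (A * dy + Bb * dx) + C * (A * dx + Bb * dy)) by ring.
    assert (0 <= C * (A * dx + Bb * dy)) by (apply Rmult_le_pos; auto; apply Rplus_le_le_0_compat; apply Rmult_le_pos; auto).
    lra. }
  lra.
Qed.


Lemma cpt_eps (f : R -> R) t : continuity_pt f t -> forall eps, 0 < eps ->
  exists d, 0 < d /\ forall z, Rabs (z - t) < d -> Rabs (f z - f t) < eps.
Proof.
  intros Hc eps He. apply continuity_pt_filterlim in Hc.
  destruct (proj1 (filterlim_locally f (f t)) Hc (mkposreal eps He)) as [d Hd].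
  exists d; split; [apply cond_pos|]. intros z Hz. apply (Hd z Hz).
Qed.

Lemma agree_closure (f g : R -> R) a s : a < s -> continuity_pt f s -> continuity_pt g s ->
  (forall t, a <= t < s -> f t = g t) -> f s = g s.
Proof.
  intros Has Hf Hg H.
  destruct (Req_dec (f s) (g s)) as [E|Ne]; auto. exfalso.
  set (e := Rabs (f s - g s)).
  assert (He : 0 < e) by (apply Rabs_pos_lt; lra).
  destruct (cpt_eps f s Hf (e/2)) as [d1 [Hd1 H1]]; [lra|].
  destruct (cpt_eps g s Hg (e/2)) as [d2 [Hd2 H2]]; [lra|].
  set (t := Rmax a (s - Rmin d1 d2 / 2)).
  assert (Hm : 0 < Rmin d1 d2) by (apply Rmin_pos; auto).
  assert (Ht1 : a <= t) by apply Rmax_l.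
  assert (Ht2 : t < s) by (unfold t; apply Rmax_lub_lt; lra).
  assert (Ht3 : s - Rmin d1 d2 / 2 <= t) by apply Rmax_r.
  assert (Hts : Rabs (t - s) < Rmin d1 d2) by (apply Rabs_lt_between; lra).
  assert (A1 := H1 t ltac:(eapply Rlt_le_trans; [exact Hts|apply Rmin_l])).
  assert (A2 := H2 t ltac:(eapply Rlt_le_trans; [exact Hts|apply Rmin_r])).
  rewrite (H t) in A1 by lra.
  assert (e <= Rabs (g t - f s) + Rabs (g t - g s)).
  { unfold e. replace (f s - g s) with (- (g t - f s) + (g t - g s)) by ring.
    eapply Rle_trans; [apply Rabs_triang|]. rewrite Rabs_Ropp. lra. }
  lra.
Qed.


Lemma uniq (beta : R -> R -> R) (gamma : R) (U : R * R -> Prop)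
  (Ho : open U) (HC : C1_on U beta) (HSU : forall x y, inS x y -> U (x, y))
  (c : R -> R) (l : list R) (x1 y1 x2 y2 : R -> R) a b :
  a <= b ->
  (forall t, a < t < b -> Rabs (c t) <= 1) ->
  (forall t, a <= t <= b -> inS (x1 t) (y1 t)) ->
  (forall t, a <= t <= b -> continuity_pt x1 t /\ continuity_pt y1 t /\
                           continuity_pt x2 t /\ continuity_pt y2 t) ->
  (forall t, a < t < b -> ~ In t l ->
     is_derive x1 t (- c t * Bf beta (x1 t) (y1 t)) /\
     is_derive y1 t (c t * Bf beta (x1 t) (y1 t) - gamma * y1 t) /\
     is_derive x2 t (- c t * Bf beta (x2 t) (y2 t)) /\
     is_derive y2 t (c t * Bf beta (x2 t) (y2 t) - gamma * y2 t)) ->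
  x1 a = x2 a -> y1 a = y2 a ->
  forall t, a <= t <= b -> x1 t = x2 t /\ y1 t = y2 t.
Proof.
  intros Hab Hcb HS Hcont Hder Hxa Hya.
  set (E := fun s => a <= s <= b /\ forall t, a <= t <= s -> x1 t = x2 t /\ y1 t = y2 t).
  assert (HEb : bound E) by (exists b; intros s [Hs _]; lra).
  assert (HEa : E a).
  { split; [lra|]. intros t Ht. replace t with a by lra. auto. }
  destruct (completeness E HEb (ex_intro _ a HEa)) as [m [Hub Hlub]].
  assert (Ham : a <= m) by (apply Hub; auto).
  assert (Hmb : m <= b) by (apply Hlub; intros s [Hs _]; lra).
  assert (HA : forall t, a <= t < m -> x1 t = x2 t /\ y1 t = y2 t).
  { intros t Ht. destruct (classic (exists s, E s /\ t < s)) as [[s [[_ Hs] Hts]]|Hn].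
    - apply Hs; lra.
    - exfalso. assert (m <= t); [|lra]. apply Hlub. intros s Hs.
      destruct (Rle_dec s t); auto. exfalso; apply Hn; exists s; split; auto; lra. }
  assert (HB : x1 m = x2 m /\ y1 m = y2 m).
  { destruct (Req_dec a m) as [<-|Hne]; [auto|].
    destruct (Hcont m) as [C1 [C2 [C3 C4]]]; [lra|].
    split; apply agree_closure with a; auto; try lra; intros; apply HA; lra. }
  assert (Hmb' : m = b).
  { destruct (Req_dec m b) as [|Hne]; auto. exfalso.
    destruct (Hcont m) as [C1 [C2 [C3 C4]]]; [lra|].
    destruct (loc_lip beta U (x1 m, y1 m) Ho HC (HSU _ _ (HS m ltac:(lra)))) as [r [L [Hr [HL Hlip]]]].
    simpl in Hlip.
    destruct (cpt_eps _ _ C1 r Hr) as [d1 [Hd1 H1]].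
    destruct (cpt_eps _ _ C2 r Hr) as [d2 [Hd2 H2]].
    destruct (cpt_eps _ _ C3 r Hr) as [d3 [Hd3 H3]].
    destruct (cpt_eps _ _ C4 r Hr) as [d4 [Hd4 H4]].
    set (K := 2 * L + Rabs gamma + 1).
    assert (HK : 0 < K) by (unfold K; generalize (Rabs_pos gamma); lra).
    set (dd := Rmin (Rmin (Rmin d1 d2) (Rmin d3 d4)) (Rmin (b - m) (/ K))).
    assert (Hdd : 0 < dd).
    { unfold dd. repeat apply Rmin_pos; auto; try lra. apply Rinv_0_lt_compat; auto. }
    assert (Hdd1 : dd <= d1) by (unfold dd; repeat (eapply Rle_trans; [apply Rmin_l|]); lra).
    assert (Hdd2 : dd <= d2) by (unfold dd; eapply Rle_trans; [apply Rmin_l|];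
       eapply Rle_trans; [apply Rmin_l|]; apply Rmin_r).
    assert (Hdd3 : dd <= d3) by (unfold dd; eapply Rle_trans; [apply Rmin_l|];
       eapply Rle_trans; [apply Rmin_r|]; apply Rmin_l).
    assert (Hdd4 : dd <= d4) by (unfold dd; eapply Rle_trans; [apply Rmin_l|];
       eapply Rle_trans; [apply Rmin_r|]; apply Rmin_r).
    assert (Hdd5 : dd <= b - m) by (unfold dd; eapply Rle_trans; [apply Rmin_r|]; apply Rmin_l).
    assert (Hdd6 : dd <= / K) by (unfold dd; eapply Rle_trans; [apply Rmin_r|]; apply Rmin_r).
    set (h := dd / 2). set (e := m + h).
    assert (Hh : 0 < h) by (unfold h; lra).
    assert (Heb : e <= b) by (unfold e, h; lra).
    assert (Heh : e - m = h) by (unfold e; ring).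
    assert (HKh : K * h < 1).
    { unfold h. apply Rmult_le_compat_l with (r := K) in Hdd6; [|lra].
      rewrite Rinv_r in Hdd6 by lra. lra. }
    set (D := fun t => Rabs (x1 t - x2 t) + Rabs (y1 t - y2 t)).
    assert (HDc : forall t, m <= t <= e -> continuity_pt D t).
    { intros t Ht. destruct (Hcont t) as [E1 [E2 [E3 E4]]]; [lra|].
      unfold D. apply continuity_pt_plus.
      - apply (continuity_pt_comp (fun t => x1 t - x2 t) Rabs). apply continuity_pt_minus; auto.
        apply Rcontinuity_abs.
      - apply (continuity_pt_comp (fun t => y1 t - y2 t) Rabs). apply continuity_pt_minus; auto.
        apply Rcontinuity_abs. }
    destruct (continuity_ab_maj D m e ltac:(lra) HDc) as [tau [Hmax Htau]].
    set (M := D tau).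
    assert (HM : 0 <= M) by (unfold M, D; generalize (Rabs_pos (x1 tau - x2 tau)) (Rabs_pos (y1 tau - y2 tau)); lra).
    assert (Hbox : forall s, m <= s <= e ->
      Rabs (x1 s - x1 m) < r /\ Rabs (y1 s - y1 m) < r /\ Rabs (x2 s - x1 m) < r /\ Rabs (y2 s - y1 m) < r).
    { intros s Hs. assert (Rabs (s - m) <= h) by (rewrite Rabs_pos_eq; lra). unfold h in H.
      rewrite <- (proj1 HB) in H3. rewrite <- (proj2 HB) in H4.
      split; [apply H1; lra|split; [apply H2; lra|split; [apply H3; lra|apply H4; lra]]]. }
    assert (Hbound : forall t, m <= t <= e -> D t <= K * M * (t - m)).
    { intros t Ht.
      assert (Hx : Rabs ((x1 t - x2 t) - (x1 m - x2 m)) <= (L * M) * (t - m)).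
      { apply (pw_abs (fun s => x1 s - x2 s) (L * M) l m t); try lra.
        - intros s Hs. destruct (Hcont s) as [E1 [E2 [E3 E4]]]; [lra|].
          apply continuity_pt_minus; auto.
        - intros s Hs Hn. destruct (Hder s ltac:(lra) Hn) as [E1 [E2 [E3 E4]]].
          eexists; split. apply (is_derive_minus x1 x2 s _ _ E1 E3).
          unfold minus, plus, opp; simpl.
          replace (- c s * Bf beta (x1 s) (y1 s) + - (- c s * Bf beta (x2 s) (y2 s)))
            with (- (c s * (Bf beta (x1 s) (y1 s) - Bf beta (x2 s) (y2 s)))) by ring.
          rewrite Rabs_Ropp, Rabs_mult.
          destruct (Hbox s) as [B1 [B2 [B3 B4]]]; [lra|].
          assert (Hl := Hlip _ _ _ _ B1 B2 B3 B4).
          assert (Ds : D s <= M) by (apply Hmax; lra). unfold D in Ds.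
          assert (Hc1 : Rabs (c s) <= 1) by (apply Hcb; lra).
          apply Rle_trans with (1 * (L * (Rabs (x1 s - x2 s) + Rabs (y1 s - y2 s)))).
          apply Rmult_le_compat; auto using Rabs_pos.
          rewrite Rmult_1_l. apply Rmult_le_compat_l; auto. }
      assert (Hy : Rabs ((y1 t - y2 t) - (y1 m - y2 m)) <= ((L + Rabs gamma) * M) * (t - m)).
      { apply (pw_abs (fun s => y1 s - y2 s) _ l m t); try lra.
        - intros s Hs. destruct (Hcont s) as [E1 [E2 [E3 E4]]]; [lra|].
          apply continuity_pt_minus; auto.
        - intros s Hs Hn. destruct (Hder s ltac:(lra) Hn) as [E1 [E2 [E3 E4]]].
          eexists; split. apply (is_derive_minus y1 y2 s _ _ E2 E4).
          unfold minus, plus, opp; simpl.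
          replace (c s * Bf beta (x1 s) (y1 s) - gamma * y1 s + - (c s * Bf beta (x2 s) (y2 s) - gamma * y2 s))
            with (c s * (Bf beta (x1 s) (y1 s) - Bf beta (x2 s) (y2 s)) + (- gamma) * (y1 s - y2 s)) by ring.
          eapply Rle_trans; [apply Rabs_triang|]. rewrite !Rabs_mult, Rabs_Ropp.
          destruct (Hbox s) as [B1 [B2 [B3 B4]]]; [lra|].
          assert (Hl := Hlip _ _ _ _ B1 B2 B3 B4).
          assert (Ds : D s <= M) by (apply Hmax; lra). unfold D in Ds.
          assert (Hc1 : Rabs (c s) <= 1) by (apply Hcb; lra).
          assert (T1 : Rabs (c s) * Rabs (Bf beta (x1 s) (y1 s) - Bf beta (x2 s) (y2 s)) <= L * M).
          { apply Rle_trans with (1 * (L * (Rabs (x1 s - x2 s) + Rabs (y1 s - y2 s)))).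
            apply Rmult_le_compat; auto using Rabs_pos.
            rewrite Rmult_1_l. apply Rmult_le_compat_l; auto. }
          assert (T2 : Rabs gamma * Rabs (y1 s - y2 s) <= Rabs gamma * M).
          { apply Rmult_le_compat_l; [apply Rabs_pos|].
            generalize (Rabs_pos (x1 s - x2 s)); lra. }
          lra. }
      rewrite (proj1 HB) in Hx. rewrite (proj2 HB) in Hy. rewrite Rminus_diag, Rminus_0_r in Hx, Hy.
      unfold D, K.
      assert (0 <= M * (t - m)) by (apply Rmult_le_pos; lra).
      assert (0 <= Rabs gamma * M * (t - m)).
      { apply Rmult_le_pos; [|lra]. apply Rmult_le_pos; auto using Rabs_pos. }
      nra. }
    assert (HM0 : M = 0).
    { assert (Hb := Hbound tau Htau). fold M in Hb.
      assert (K * M * (tau - m) <= K * M * h).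
      { apply Rmult_le_compat_l. apply Rmult_le_pos; lra. lra. }
      assert (K * h * M <= 1 * M) by (apply Rmult_le_compat_r; lra).
      nra. }
    assert (HEe : E e).
    { split; [unfold e; lra|]. intros t Ht.
      destruct (Rlt_dec t m); [apply HA; lra|].
      assert (HD0 : D t <= 0) by (rewrite <- HM0; apply Hmax; lra).
      unfold D in HD0. generalize (Rabs_pos (x1 t - x2 t)) (Rabs_pos (y1 t - y2 t)); intros P1 P2.
      assert (Z1 : Rabs (x1 t - x2 t) = 0) by lra. assert (Z2 : Rabs (y1 t - y2 t) = 0) by lra.
      apply Rabs_eq_0 in Z1. apply Rabs_eq_0 in Z2. split; lra. }
    assert (Hem : e <= m) by (apply Hub; auto). lra. }
  intros t Ht. destruct (Req_dec t m) as [->|]; auto. apply HA; lra.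
Qed.


Lemma incr_strict (f : R -> R) l a b : a < b ->
  (forall t, a <= t <= b -> continuity_pt f t) ->
  (forall t, a < t < b -> ~ In t l -> exists d, is_derive f t d /\ 0 < d) -> f a < f b.
Proof.
  intros Hab Hc Hd.
  assert (H : (fun t => - f t) b - (fun t => - f t) a < 0 * (b - a)).
  { apply (pw_lt (fun t => - f t) 0 l); auto.
    - intros t Ht. apply (continuity_pt_opp f t). auto.
    - intros t Ht Hn. destruct (Hd t Ht Hn) as [d [H1 H2]]. exists (- d); split; [|lra].
      apply (is_derive_opp f t d H1). }
  simpl in H. lra.
Qed.

Lemma decr_strict (f : R -> R) l a b : a < b ->
  (forall t, a <= t <= b -> continuity_pt f t) ->
  (forall t, a < t < b -> ~ In t l -> exists d, is_derive f t d /\ d < 0) -> f b < f a.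
Proof.
  intros Hab Hc Hd. assert (H := pw_lt f 0 l a b Hab Hc Hd). lra.
Qed.

Lemma decr_weak (f : R -> R) l a b : a <= b ->
  (forall t, a <= t <= b -> continuity_pt f t) ->
  (forall t, a < t < b -> ~ In t l -> exists d, is_derive f t d /\ d <= 0) -> f b <= f a.
Proof.
  intros Hab Hc Hd. assert (H := pw_le f 0 l a b Hab Hc Hd). lra.
Qed.

Lemma comp_cont (beta : R -> R -> R) (x y : R -> R) t :
  continuity_pt x t -> continuity_pt y t ->
  continuous (fun q : R * R => beta (fst q) (snd q)) (x t, y t) ->
  continuity_pt (fun s => beta (x s) (y s)) t.
Proof.
  intros Hx Hy Hb. apply (proj2 (continuity_pt_filterlim _ _)).
  apply (continuous_comp_2 x y beta t).
  apply (proj1 (continuity_pt_filterlim _ _)); auto.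
  apply (proj1 (continuity_pt_filterlim _ _)); auto.
  exact Hb.
Qed.

Lemma neg_near (f : R -> R) t : continuity_pt f t -> f t < 0 ->
  exists d, 0 < d /\ forall z, Rabs (z - t) < d -> f z < 0.
Proof.
  intros Hc Hn. destruct (cpt_eps f t Hc (- f t)) as [d [Hd H]]; [lra|].
  exists d; split; auto. intros z Hz. specialize (H z Hz). apply Rabs_lt_between in H. lra.
Qed.

Lemma pos_near (f : R -> R) t : continuity_pt f t -> 0 < f t ->
  exists d, 0 < d /\ forall z, Rabs (z - t) < d -> 0 < f z.
Proof.
  intros Hc Hn. destruct (cpt_eps f t Hc (f t)) as [d [Hd H]]; [lra|].
  exists d; split; auto. intros z Hz. specialize (H z Hz). apply Rabs_lt_between in H. lra.
Qed.


Lemma deriv_cont (f : R -> R) t : ex_derive f t -> continuity_pt f t.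
Proof. intros H. apply (proj2 (continuity_pt_filterlim _ _)). apply (ex_derive_continuous f t H). Qed.

Lemma mono_x (beta : R -> R -> R) (U : R * R -> Prop)
  (HU : forall a b, inS a b -> U (a, b)) (HC : C1_on U beta) (hA1 : assumption1 beta)
  ybar : 0 <= ybar -> forall a b, 0 <= a < b -> b + ybar <= 1 ->
  a * beta a ybar < b * beta b ybar.
Proof.
  intros Hy a b Hab Hb.
  assert (Hd : forall s, a <= s <= b -> is_derive (fun s => s * beta s ybar) s
                 (beta s ybar + s * partial_x beta s ybar)).
  { intros s Hs.
    assert (HS : inS s ybar) by (unfold inS; lra).
    destruct (HC (s, ybar) (HU _ _ HS)) as [_ [Hex _]]. simpl in Hex.
    assert (H1 := is_derive_mult (fun s => s) (fun s => beta s ybar) s 1 _ (is_derive_id s)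
                 (Derive_correct _ _ Hex) Rmult_comm).
    simpl in H1. unfold mult, plus in H1; simpl in H1.
    replace (beta s ybar + s * partial_x beta s ybar) with (1 * beta s ybar + s * Derive (fun s0 => beta s0 ybar) s)
      by (unfold partial_x; ring). exact H1. }
  apply (incr_strict (fun s => s * beta s ybar) nil a b); [lra| |].
  - intros t Ht. apply deriv_cont. eexists. apply Hd; auto.
  - intros t Ht _. eexists; split; [apply Hd; lra|].
    assert (HS : inS t ybar) by (unfold inS; lra).
    destruct (hA1 t ybar HS). lra.
Qed.

Lemma mono_y (beta : R -> R -> R) (U : R * R -> Prop)
  (HU : forall a b, inS a b -> U (a, b)) (HC : C1_on U beta) (hA1 : assumption1 beta)
  ybar : 0 <= ybar -> forall x y, inS x y -> ybar <= y -> beta x y <= beta x ybar.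
Proof.
  intros Hy x y HS Hyy.
  assert (Hd : forall s, ybar <= s <= y -> is_derive (fun s => beta x s) s (partial_y beta x s)).
  { intros s Hs. assert (HS' : inS x s) by (unfold inS in *; lra).
    destruct (HC (x, s) (HU _ _ HS')) as [_ [_ [Hex _]]]. simpl in Hex.
    apply (Derive_correct _ _ Hex). }
  apply (decr_weak (fun s => beta x s) nil); auto.
  - intros t Ht. apply deriv_cont. eexists. apply Hd; auto.
  - intros t Ht _. eexists; split; [apply Hd; lra|].
    assert (HS' : inS x t) by (unfold inS in *; lra).
    destruct (hA1 x t HS'). lra.
Qed.


Lemma Bf_nonneg beta x y : inS x y -> (forall a b, inS a b -> 0 < beta a b) -> 0 <= Bf beta x y.
Proof.
  intros HS Hb. unfold Bf. assert (H := Hb x y HS). unfold inS in HS.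
  apply Rmult_le_pos; [apply Rmult_le_pos|]; lra.
Qed.

Lemma after (beta : R -> R -> R) (gamma : R) (U : R * R -> Prop)
  (HU : forall a b, inS a b -> U (a, b)) (HC : C1_on U beta) (hA1 : assumption1 beta)
  (hbp : forall a b, inS a b -> 0 < beta a b)
  xbar ybar (Hxb : 0 < xbar) (Hyb : 0 < ybar) (Hxy : xbar + ybar <= 1)
  (Hkey : xbar * beta xbar ybar = gamma)
  (x y : R -> R) T1 l
  (Hc : forall t, continuity_pt x t /\ continuity_pt y t)
  (HS : forall t, T1 <= t -> inS (x t) (y t))
  (Hx1 : x T1 = xbar) (Hy1 : y T1 = ybar)
  (Hd : forall t, T1 < t -> ~ In t l ->
     is_derive x t (- Bf beta (x t) (y t)) /\ is_derive y t (Bf beta (x t) (y t) - gamma * y t)) :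
  forall t, T1 < t -> y t < ybar.
Proof.
  assert (Hbc : forall t, T1 <= t -> continuity_pt (fun s => beta (x s) (y s)) t).
  { intros t Ht. apply comp_cont; try apply Hc.
    destruct (HC _ (HU _ _ (HS t Ht))) as [H _]. exact H. }
  assert (Hq : forall t, T1 <= t -> continuity_pt (fun s => Bf beta (x s) (y s) - gamma * y s) t).
  { intros t Ht. unfold Bf. destruct (Hc t) as [C1 C2].
    apply continuity_pt_minus. apply continuity_pt_mult; [apply continuity_pt_mult|]; auto.
    apply continuity_pt_mult; auto. apply continuity_pt_const. intros a b; auto. }
  assert (Hmx : forall a, 0 <= a < xbar -> a * beta a ybar < gamma).
  { intros a Ha. rewrite <- Hkey. apply (mono_x beta U HU HC hA1); lra. }
  assert (Hmx' : forall a, 0 <= a <= xbar -> a * beta a ybar <= gamma).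
  { intros a Ha. destruct (Req_dec a xbar) as [->|]; [lra|]. left; apply Hmx; lra. }
  assert (Hxle : forall t, T1 <= t -> x t <= xbar).
  { intros t Ht. rewrite <- Hx1. apply (decr_weak x l); auto.
    - intros s _. apply Hc.
    - intros s Hs Hn. exists (- Bf beta (x s) (y s)). split; [apply Hd; auto; lra|].
      assert (0 <= Bf beta (x s) (y s)) by (apply Bf_nonneg; auto; apply HS; lra). lra. }
  assert (Hdy : forall s, T1 <= s -> ybar <= y s -> Bf beta (x s) (y s) - gamma * y s <= 0).
  { intros s Hs Hys. assert (HSs := HS s Hs).
    assert (H1 : beta (x s) (y s) <= beta (x s) ybar) by (apply (mono_y beta U HU HC hA1); auto; lra).
    assert (H2 : x s * beta (x s) ybar <= gamma) by (apply Hmx'; unfold inS in HSs; split; [lra|]; apply Hxle; auto).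
    unfold Bf. unfold inS in HSs.
    assert (x s * beta (x s) (y s) <= gamma).
    { apply Rle_trans with (x s * beta (x s) ybar); auto. apply Rmult_le_compat_l; lra. }
    replace (beta (x s) (y s) * x s * y s - gamma * y s) with (y s * (x s * beta (x s) (y s) - gamma)) by ring.
    assert (0 <= y s) by lra.
    assert (x s * beta (x s) (y s) - gamma <= 0) by lra. nra. }
  assert (Hyle : forall t, T1 <= t -> y t <= ybar).
  { intros t1 Ht1. destruct (Rle_dec (y t1) ybar) as [|Hgt]; auto. exfalso.
    set (A := fun s => T1 <= s <= t1 /\ y s <= ybar).
    assert (HAb : bound A) by (exists t1; intros s [Hs _]; lra).
    assert (HA0 : A T1) by (split; lra).
    destruct (completeness A HAb (ex_intro _ T1 HA0)) as [m [Hub Hlub]].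
    assert (Hm1 : T1 <= m) by (apply Hub; auto).
    assert (Hm2 : m <= t1) by (apply Hlub; intros s [Hs _]; lra).
    assert (Hym : y m <= ybar).
    { destruct (Rle_dec (y m) ybar) as [|Hg]; auto. exfalso.
      destruct (pos_near (fun s => y s - ybar) m) as [d [Hd0 Hd1]].
      { apply continuity_pt_minus; [apply Hc|apply continuity_pt_const; intros a b; auto]. }
      { lra. }
      destruct (classic (exists s, A s /\ m - d < s)) as [[s [[Hs1 Hs2] Hs3]]|Hn].
      - assert (s <= m) by (apply Hub; split; auto).
        assert (0 < y s - ybar) by (apply Hd1; apply Rabs_lt_between; lra). lra.
      - assert (m <= m - d); [|lra]. apply Hlub. intros s Hs.
        destruct (Rle_dec s (m - d)); auto. exfalso; apply Hn; exists s; split; auto; lra. }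
    assert (Hmt : m < t1) by (destruct (Req_dec m t1); [subst; lra|lra]).
    assert (Hgt2 : forall s, m < s <= t1 -> ybar < y s).
    { intros s Hs. destruct (Rlt_dec ybar (y s)); auto. exfalso.
      assert (s <= m) by (apply Hub; split; [lra|lra]). lra. }
    assert (y t1 <= y m).
    { apply (decr_weak y l); [lra| |].
      - intros s _. apply Hc.
      - intros s Hs Hn. exists (Bf beta (x s) (y s) - gamma * y s). split; [apply Hd; auto; lra|].
        apply Hdy; [lra|]. left; apply Hgt2; lra. }
    lra. }
  intros t1 Ht1.
  destruct (Rlt_dec (y t1) ybar) as [|Hn]; auto. exfalso.
  assert (Hyt : y t1 = ybar) by (assert (H := Hyle t1 ltac:(lra)); lra).
  assert (HSt := HS t1 ltac:(lra)).
  destruct (Req_dec (x t1) xbar) as [Hxt|Hxt].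
  - (* x stays at xbar: contradiction near T1 *)
    assert (Hp : continuity_pt (fun s => Bf beta (x s) (y s)) T1).
    { unfold Bf. destruct (Hc T1). apply continuity_pt_mult; [apply continuity_pt_mult|]; auto. apply Hbc; lra. }
    destruct (pos_near _ T1 Hp) as [d [Hd0 Hd1]].
    { unfold Bf. rewrite Hx1, Hy1. assert (0 < beta xbar ybar) by (apply hbp; unfold inS; lra).
      apply Rmult_lt_0_compat; [apply Rmult_lt_0_compat|]; lra. }
    set (s := Rmin (T1 + d / 2) t1).
    assert (Hs1 : T1 < s) by (unfold s; apply Rmin_glb_lt; lra).
    assert (Hs2 : s <= t1) by apply Rmin_r.
    assert (Hs3 : s <= T1 + d / 2) by apply Rmin_l.
    assert (x s < x T1).
    { apply (decr_strict x l); auto. intros z _. apply Hc.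
      intros z Hz Hnz. exists (- Bf beta (x z) (y z)). split; [apply Hd; auto; lra|].
      assert (0 < Bf beta (x z) (y z)) by (apply Hd1; apply Rabs_lt_between; lra). lra. }
    assert (x t1 <= x s).
    { apply (decr_weak x l); auto. intros z _. apply Hc.
      intros z Hz Hnz. exists (- Bf beta (x z) (y z)). split; [apply Hd; auto; lra|].
      assert (0 <= Bf beta (x z) (y z)) by (apply Bf_nonneg; auto; apply HS; lra). lra. }
    lra.
  - assert (Hxl : 0 <= x t1 < xbar) by (unfold inS in HSt; split; [lra|]; assert (H := Hxle t1 ltac:(lra)); lra).
    assert (Hqn : (fun s => Bf beta (x s) (y s) - gamma * y s) t1 < 0).
    { simpl. unfold Bf. rewrite Hyt.
      replace (beta (x t1) ybar * x t1 * ybar - gamma * ybar) with (ybar * (x t1 * beta (x t1) ybar - gamma)) by ring.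
      assert (H := Hmx _ Hxl). assert (0 < ybar * (gamma - x t1 * beta (x t1) ybar)) by (apply Rmult_lt_0_compat; lra).
      lra. }
    destruct (neg_near _ t1 (Hq t1 ltac:(lra)) Hqn) as [d [Hd0 Hd1]].
    set (s := Rmax T1 (t1 - d / 2)).
    assert (Hs1 : s < t1) by (unfold s; apply Rmax_lub_lt; lra).
    assert (Hs2 : T1 <= s) by apply Rmax_l.
    assert (Hs3 : t1 - d / 2 <= s) by apply Rmax_r.
    assert (y t1 < y s).
    { apply (decr_strict y l); auto. intros z _. apply Hc.
      intros z Hz Hnz. eexists. split; [apply Hd; auto; lra|].
      apply (Hd1 z). apply Rabs_lt_between; lra. }
    assert (y s <= ybar) by (apply Hyle; lra). lra.
Qed.


Lemma before (beta : R -> R -> R) (gamma : R) (U : R * R -> Prop)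
  (HU : forall a b, inS a b -> U (a, b)) (HC : C1_on U beta) (hA1 : assumption1 beta)
  xbar ybar (Hxb : 0 < xbar) (Hyb : 0 < ybar) (Hxy : xbar + ybar <= 1)
  (Hkey : xbar * beta xbar ybar = gamma)
  (x y : R -> R) T0 l
  (Hc : forall t, continuity_pt x t /\ continuity_pt y t)
  (HS : forall t, 0 <= t -> inS (x t) (y t))
  (Hy0 : y 0 < ybar)
  (Hd : forall t, 0 < t -> ~ In t l -> is_derive y t (Bf beta (x t) (y t) - gamma * y t))
  (HnJ : forall t, 0 <= t < T0 -> ~ (y t = ybar /\ xbar < x t /\ x t <= 1 - ybar))
  (Hnp : forall t, 0 <= t -> ~ (x t = xbar /\ y t = ybar)) :
  forall t, 0 <= t < T0 -> y t < ybar.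
Proof.
  assert (Hbc : forall t, 0 <= t -> continuity_pt (fun s => beta (x s) (y s)) t).
  { intros t Ht. apply comp_cont; try apply Hc.
    destruct (HC _ (HU _ _ (HS t Ht))) as [H _]. exact H. }
  assert (Hq : forall t, 0 <= t -> continuity_pt (fun s => Bf beta (x s) (y s) - gamma * y s) t).
  { intros t Ht. unfold Bf. destruct (Hc t) as [C1 C2].
    apply continuity_pt_minus. apply continuity_pt_mult; [apply continuity_pt_mult|]; auto.
    apply continuity_pt_mult; auto. apply continuity_pt_const. intros a b; auto. }
  assert (Hmx : forall a, 0 <= a < xbar -> a * beta a ybar < gamma).
  { intros a Ha. rewrite <- Hkey. apply (mono_x beta U HU HC hA1); lra. }
  intros t1 Ht1. destruct (Rlt_dec (y t1) ybar) as [|Hge]; auto. exfalso.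
  set (A := fun s => 0 <= s <= t1 /\ forall r, 0 <= r <= s -> y r < ybar).
  assert (HAb : bound A) by (exists t1; intros s [Hs _]; lra).
  assert (HA0 : A 0) by (split; [lra|]; intros r Hr; replace r with 0 by lra; auto).
  destruct (completeness A HAb (ex_intro _ 0 HA0)) as [m [Hub Hlub]].
  assert (Hm1 : 0 <= m) by (apply Hub; auto).
  assert (Hm2 : m <= t1) by (apply Hlub; intros s [Hs _]; lra).
  assert (Hbel : forall r, 0 <= r < m -> y r < ybar).
  { intros r Hr. destruct (classic (exists s, A s /\ r < s)) as [[s [[_ Hs] Hrs]]|Hn].
    - apply Hs; lra.
    - exfalso. assert (m <= r); [|lra]. apply Hlub. intros s Hs.
      destruct (Rle_dec s r); auto. exfalso; apply Hn; exists s; split; auto; lra. }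
  assert (Hym : ybar <= y m).
  { destruct (Rle_dec ybar (y m)) as [|Hl]; auto. exfalso.
    destruct (neg_near (fun s => y s - ybar) m) as [d [Hd0 Hd1]].
    { apply continuity_pt_minus; [apply Hc|apply continuity_pt_const; intros a b; auto]. }
    { simpl; lra. }
    assert (Hmt : m < t1) by (destruct (Req_dec m t1); [subst; lra|lra]).
    set (s := Rmin (m + d / 2) t1).
    assert (Hs1 : m < s) by (unfold s; apply Rmin_glb_lt; lra).
    assert (Hs2 : s <= t1) by apply Rmin_r.
    assert (Hs3 : s <= m + d / 2) by apply Rmin_l.
    assert (A s).
    { split; [lra|]. intros r Hr. destruct (Rlt_dec r m); [apply Hbel; lra|].
      assert (y r - ybar < 0) by (apply Hd1; apply Rabs_lt_between; lra). lra. }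
    assert (s <= m) by (apply Hub; auto). lra. }
  assert (Hmpos : 0 < m) by (destruct (Req_dec m 0) as [E|]; [rewrite E in Hym; lra|lra]).
  assert (Hym' : y m <= ybar).
  { destruct (Rle_dec (y m) ybar) as [|Hg]; auto. exfalso.
    destruct (pos_near (fun s => y s - ybar) m) as [d [Hd0 Hd1]].
    { apply continuity_pt_minus; [apply Hc|apply continuity_pt_const; intros a b; auto]. }
    { simpl; lra. }
    set (s := Rmax 0 (m - d / 2)).
    assert (Hs1 : s < m) by (unfold s; apply Rmax_lub_lt; lra).
    assert (Hs2 : 0 <= s) by apply Rmax_l.
    assert (Hs3 : m - d / 2 <= s) by apply Rmax_r.
    assert (0 < y s - ybar) by (apply Hd1; apply Rabs_lt_between; lra).
    assert (y s < ybar) by (apply Hbel; lra). lra. }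
  assert (Hyeq : y m = ybar) by lra.
  assert (HSm := HS m Hm1). unfold inS in HSm.
  assert (Hxm : x m < xbar).
  { destruct (Rlt_dec (x m) xbar) as [|Hn]; auto. exfalso.
    destruct (Req_dec (x m) xbar) as [E|Ne].
    - apply (Hnp m Hm1); auto.
    - apply (HnJ m); [lra|]. repeat split; auto; lra. }
  assert (Hqn : (fun s => Bf beta (x s) (y s) - gamma * y s) m < 0).
  { simpl. unfold Bf. rewrite Hyeq.
    replace (beta (x m) ybar * x m * ybar - gamma * ybar) with (ybar * (x m * beta (x m) ybar - gamma)) by ring.
    assert (H := Hmx (x m) ltac:(lra)). assert (0 < ybar * (gamma - x m * beta (x m) ybar)) by (apply Rmult_lt_0_compat; lra).
    lra. }
  destruct (neg_near _ m (Hq m Hm1) Hqn) as [d [Hd0 Hd1]].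
  set (s := Rmax 0 (m - d / 2)).
  assert (Hs1 : s < m) by (unfold s; apply Rmax_lub_lt; lra).
  assert (Hs2 : 0 <= s) by apply Rmax_l.
  assert (Hs3 : m - d / 2 <= s) by apply Rmax_r.
  assert (y m < y s).
  { apply (decr_strict y l); auto. intros z _. apply Hc.
    intros z Hz Hnz. eexists. split; [apply Hd; auto; lra|].
    apply (Hd1 z). apply Rabs_lt_between; lra. }
  assert (y s < ybar) by (apply Hbel; lra). lra.
Qed.


Lemma is_RInt_0 a b : is_RInt (fun _ : R => 0) a b 0.
Proof.
  assert (H := @is_RInt_const R_NormedModule a b 0).
  assert (E : scal (b - a) (0 : R_NormedModule) = 0) by (unfold scal; simpl; unfold mult; simpl; ring).
  rewrite E in H. exact H.
Qed.

Lemma integ_gen (u g : R -> R) T0 T1 I : 0 <= T0 -> T0 <= T1 ->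
  (forall t, t < T0 -> u t = 0) -> (forall t, T1 < t -> u t = 0) ->
  (forall t, T0 <= t <= T1 -> u t = g t) -> is_RInt g T0 T1 I ->
  is_RInt_gen u (at_point 0) (Rbar_locally p_infty) I.
Proof.
  intros H0 H01 Hu1 Hu2 Hu3 Hg.
  unfold is_RInt_gen, filterlimi, filtermapi. intros P HP. simpl.
  apply Filter_prod with (fun a => a = 0) (fun b => T1 < b).
  - reflexivity.
  - exists T1. auto.
  - intros a b Ha Hb. subst a. exists I. split; [|apply locally_singleton; auto].
    assert (E1 : is_RInt u 0 T0 0).
    { apply is_RInt_ext with (fun _ => 0).
      intros x Hx. rewrite Rmin_left, Rmax_right in Hx by lra. rewrite Hu1; lra.
      apply is_RInt_0. }
    assert (E2 : is_RInt u T0 T1 I).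
    { apply is_RInt_ext with g; auto.
      intros x Hx. rewrite Rmin_left, Rmax_right in Hx by lra. rewrite Hu3; lra. }
    assert (E3 : is_RInt u T1 b 0).
    { apply is_RInt_ext with (fun _ => 0).
      intros x Hx. rewrite Rmin_left, Rmax_right in Hx by lra. rewrite Hu2; lra.
      apply is_RInt_0. }
    assert (H := is_RInt_Chasles u 0 T1 b _ _ (is_RInt_Chasles u 0 T0 T1 _ _ E1 E2) E3).
    unfold plus in H; simpl in H. replace I with (0 + I + 0) by ring. exact H.
Qed.

Lemma integ_lin (f : R -> R) T0 T1 h0 xbar k : 0 < k -> T1 = T0 + (h0 - xbar) / k ->
  ex_RInt f xbar h0 ->
  is_RInt (fun t => f (h0 - k * (t - T0))) T0 T1 (/ k * RInt f xbar h0).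
Proof.
  intros Hk HT1 Hex.
  assert (Hex' : ex_RInt f h0 xbar) by (apply ex_RInt_swap; auto).
  assert (E1 : (- k) * T0 + (h0 + k * T0) = h0) by ring.
  assert (E2 : (- k) * T1 + (h0 + k * T0) = xbar) by (rewrite HT1; field; lra).
  assert (H1 : is_RInt f ((- k) * T0 + (h0 + k * T0)) ((- k) * T1 + (h0 + k * T0)) (RInt f h0 xbar)).
  { rewrite E1, E2. exact (RInt_correct (V := R_CompleteNormedModule) f h0 xbar Hex'). }
  assert (H2 := is_RInt_comp_lin f (- k) (h0 + k * T0) T0 T1 _ H1).
  assert (H3 := is_RInt_scal _ T0 T1 (- / k) _ H2).
  apply is_RInt_ext with (f := fun y => scal (- / k) (scal (- k) (f (- k * y + (h0 + k * T0))))).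
  - intros x _. unfold scal; simpl; unfold mult; simpl.
    replace (- k * x + (h0 + k * T0)) with (h0 - k * (x - T0)) by ring. field. lra.
  - replace (/ k * RInt f xbar h0) with (scal (- / k) (RInt f h0 xbar)); auto.
    rewrite <- (opp_RInt_swap f xbar h0 Hex). unfold scal, opp; simpl; unfold mult; simpl. ring.
Qed.


Definition clamp (f : R -> R) (t : R) : R := f (Rmax 0 t).

Lemma clampE f t : 0 <= t -> clamp f t = f t.
Proof. intros H. unfold clamp. rewrite Rmax_right; auto. Qed.

Lemma is_derive_eq (f : R -> R) (t v w : R) : is_derive f t v -> v = w -> is_derive f t w.
Proof. intros H <-; exact H. Qed.

Lemma clamp_derive (f : R -> R) t v : 0 < t -> is_derive f t v -> is_derive (clamp f) t v.
Proof.
  intros Ht H. apply (is_derive_ext_loc f (clamp f)); [|exact H].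
  exists (mkposreal t Ht). intros s Hs. change (Rabs (s - t) < t) in Hs.
  apply Rabs_lt_between in Hs. unfold clamp. rewrite Rmax_right; lra.
Qed.

Lemma sol_pack gamma beta u x y x0 y0 : 0 < gamma -> is_solution gamma beta u x y x0 y0 ->
  (forall t, continuity_pt (clamp x) t /\ continuity_pt (clamp y) t) /\
  (forall t, 0 <= t -> inS (clamp x t) (clamp y t)) /\
  clamp x 0 = x0 /\ clamp y 0 = y0 /\
  exists l, forall t, 0 < t -> ~ In t l ->
    is_derive (clamp x) t (- (1 - u t) * Bf beta (clamp x t) (clamp y t)) /\
    is_derive (clamp y) t ((1 - u t) * Bf beta (clamp x t) (clamp y t) - gamma * clamp y t).
Proof.
  intros Hg [Hx0 [Hy0 [HS [Hlx [Hly [Hc [l Hd]]]]]]].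
  split; [|split; [|split; [|split]]].
  - intros t. split; apply clamp_cont; auto.
    + rewrite Hx0; auto. + intros; apply Hc; auto.
    + rewrite Hy0; auto. + intros; apply Hc; auto.
  - intros t Ht. rewrite !clampE; auto.
  - rewrite clampE; auto; lra.
  - rewrite clampE; auto; lra.
  - exists l. intros t Ht Hn. destruct (Hd t Ht Hn) as [H1 H2].
    rewrite !clampE by lra. split; apply clamp_derive; auto.
    + eapply is_derive_eq; [exact H1|]. unfold Rrep, Bf. field. lra.
    + eapply is_derive_eq; [exact H2|]. unfold Rrep, Bf. field. lra.
Qed.


Lemma notin_app (t : R) l1 l2 : ~ In t (l1 ++ l2) -> ~ In t l1 /\ ~ In t l2.
Proof. intros H; split; intros H'; apply H; apply in_or_app; auto. Qed.

Theorem proposition3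
  (gamma : R) (beta : R -> R -> R)
  (hgamma : 0 < gamma)
  (hC2 : C2_on_S beta)
  (hbeta_pos : forall x y, inS x y -> 0 < beta x y)
  (hA1 : assumption1 beta)
  (hbeta10 : beta 1 0 > gamma)
  (ytil : R) (hytil : 0 < ytil < 1)
  (hRytil : Rrep gamma beta (1 - ytil) ytil = 1)
  (xbar ybar : R) (hybar : 0 < ybar < ytil)
  (hxbarS : inS xbar ybar) (hRxbar : Rrep gamma beta xbar ybar = 1)
  (phi : R -> R * R -> R * R) (hphi : is_flow gamma beta phi)
  (yhat : R) (lam : R -> R)
  (hyhat : 0 <= yhat <= ybar)
  (hlam_bar : lam ybar = xbar)
  (hlam_range : forall y, yhat <= y <= ybar -> xbar <= lam y <= 1)
  (hlam_decr : forall y1 y2, yhat <= y1 -> y1 < y2 -> y2 <= ybar -> lam y2 < lam y1)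
  (hlam_clos : forall p, closure2 (Gminus phi xbar ybar) p <->
                 exists y, yhat <= y <= ybar /\ p = (lam y, y))
  (x0 y0 : R) (hx0y0 : inDplus ybar yhat lam x0 y0)
  (T0 : R) (hT0pos : 0 <= T0)
  (hT0J : inJ xbar ybar (phi T0 (x0, y0)))
  (hT0first : forall t, 0 <= t < T0 -> ~ inJ xbar ybar (phi t (x0, y0)))
  (xs ys : R -> R)
  (hsol : is_solution gamma beta
            (ustar gamma beta xbar ybar T0 (fst (phi T0 (x0, y0)))) xs ys x0 y0) :
  let h0 := fst (phi T0 (x0, y0)) in
  let T1 := Tone gamma xbar ybar T0 h0 in
  let u := ustar gamma beta xbar ybar T0 h0 in
  (forall t, T0 < t < T1 -> xs t = h0 - gamma * (t - T0) * ybar /\ ys t = ybar) /\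
  (forall t, 0 <= t -> u t = mu gamma beta ybar (xs t) (ys t)) /\
  (forall t, 0 <= t -> ys t <= ybar) /\
  is_RInt_gen u (at_point 0) (Rbar_locally p_infty)
    (/ (gamma * ybar) * RInt (fun x => rho gamma beta x ybar) xbar h0).
Proof.
  intros h0 T1 u.
  destruct hC2 as [U [HoU [HSU [HC1 _]]]].
  assert (HSU' : forall a b, inS a b -> U (a, b)) by (intros; apply HSU; auto).
  assert (Hxy : xbar + ybar <= 1) by (unfold inS in hxbarS; lra).
  assert (Hkey : xbar * beta xbar ybar = gamma).
  { unfold Rrep in hRxbar. apply (f_equal (fun z => gamma * z)) in hRxbar. 
    rewrite Rmult_1_r in hRxbar. rewrite <- hRxbar. field. lra. }
  assert (Hxb : 0 < xbar).
  { unfold inS in hxbarS. destruct (Req_dec xbar 0) as [E|]; [|lra].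
    rewrite E in Hkey. lra. }
  assert (Hyb : 0 < ybar) by lra.
  destruct hx0y0 as [HS0 [Hy0a [Hy0b Hx0lam]]].
  destruct hT0J as [HSJ [HyJ HxJ]].
  fold h0 in HxJ, HSJ.
  assert (Hph := hphi x0 y0 HS0). simpl in Hph.
  set (px := fun t => fst (phi t (x0, y0))) in Hph.
  set (py := fun t => snd (phi t (x0, y0))) in Hph.
  destruct (sol_pack _ _ _ _ _ _ _ hgamma Hph) as [PC [PS [P0x [P0y [lp Pd]]]]].
  destruct (sol_pack _ _ _ _ _ _ _ hgamma hsol) as [XC [XSS [X0x [X0y [lx Xd]]]]].
  fold h0 in Xd.
  set (PX := clamp px) in *. set (PY := clamp py) in *.
  set (XS := clamp xs) in *. set (YS := clamp ys) in *.
  assert (HPT0 : PX T0 = h0 /\ PY T0 = ybar).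
  { unfold PX, PY. rewrite !clampE by lra. split; [reflexivity|exact HyJ]. }
  assert (Hk : 0 < gamma * ybar) by (apply Rmult_lt_0_compat; lra).
  assert (HT1 : T0 < T1).
  { unfold T1, Tone. assert (0 < (h0 - xbar) / (gamma * ybar)); [|lra].
    apply Rdiv_lt_0_compat; lra. }
  assert (Hu1 : forall t, t < T0 -> u t = 0).
  { intros t Ht. unfold u, ustar. destruct (Rlt_dec t T0); [auto|lra]. }
  assert (Hu2 : forall t, T1 < t -> u t = 0).
  { intros t Ht. unfold u, ustar. destruct (Rlt_dec t T0); [auto|].
    fold T1. destruct (Rlt_dec T1 t); [auto|lra]. }
  set (X := fun t => h0 - gamma * (t - T0) * ybar).
  assert (Hu3 : forall t, T0 <= t <= T1 -> u t = rho gamma beta (X t) ybar).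
  { intros t Ht. unfold u, ustar. destruct (Rlt_dec t T0); [lra|].
    fold T1. destruct (Rlt_dec T1 t); [lra|]. reflexivity. }
  assert (HXr : forall t, T0 <= t <= T1 -> xbar <= X t <= h0).
  { intros t Ht. unfold X.
    assert (gamma * ybar * (t - T0) <= h0 - xbar).
    { apply Rle_trans with (gamma * ybar * ((h0 - xbar) / (gamma * ybar))).
      apply Rmult_le_compat_l; [lra|]. unfold T1, Tone in Ht. lra.
      right. field. lra. }
    assert (0 <= gamma * ybar * (t - T0)) by (apply Rmult_le_pos; lra).
    lra. }
  assert (HXT1 : X T1 = xbar).
  { unfold X, T1, Tone. field. lra. }
  assert (HXb : forall t, T0 <= t <= T1 -> gamma <= X t * beta (X t) ybar).
  { intros t Ht. destruct (HXr t Ht) as [A1 A2].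
    destruct (Req_dec (X t) xbar) as [E|E]; [rewrite E; lra|].
    rewrite <- Hkey. left. apply (mono_x beta U HSU' HC1 hA1); lra. }
  assert (HXpos : forall t, T0 <= t <= T1 -> 0 < X t /\ 0 < beta (X t) ybar).
  { intros t Ht. destruct (HXr t Ht). split; [lra|]. apply hbeta_pos. unfold inS; lra. }
  assert (Hrho : forall t, T0 <= t <= T1 -> 1 - u t = gamma / (X t * beta (X t) ybar)).
  { intros t Ht. rewrite Hu3 by auto. unfold rho. ring. }
  assert (Hrho01 : forall t, T0 <= t <= T1 -> 0 < 1 - u t <= 1).
  { intros t Ht. rewrite Hrho by auto. destruct (HXpos t Ht) as [A1 A2].
    assert (Hw : 0 < X t * beta (X t) ybar) by (apply Rmult_lt_0_compat; auto).
    assert (HW := HXb t Ht). split.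
    - apply Rdiv_lt_0_compat; lra.
    - unfold Rdiv. apply Rle_trans with (gamma * / gamma).
      apply Rmult_le_compat_l; [lra|]. apply Rinv_le_contravar; lra.
      right; field; lra. }
  assert (Eq1 : forall t, 0 <= t <= T0 -> XS t = PX t /\ YS t = PY t).
  { apply (uniq beta gamma U HoU HC1 HSU' (fun _ => 1) (lx ++ lp)); auto.
    - intros t _. rewrite Rabs_R1; lra.
    - intros t Ht. apply XSS; lra.
    - intros t _. destruct (XC t), (PC t); auto.
    - intros t Ht Hn. apply notin_app in Hn. destruct Hn as [Hn1 Hn2].
      destruct (Xd t ltac:(lra) Hn1) as [D1 D2]. destruct (Pd t ltac:(lra) Hn2) as [D3 D4].
      rewrite Hu1 in D1, D2 by lra. simpl in D3, D4.
      replace (1 - 0) with 1 in * by ring. auto.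
    - rewrite X0x, P0x; auto.
    - rewrite X0y, P0y; auto. }
  assert (HXT0 : XS T0 = h0 /\ YS T0 = ybar).
  { destruct (Eq1 T0) as [A1 A2]; [lra|]. rewrite A1, A2; auto. }
  assert (Hbef : forall t, 0 <= t < T0 -> PY t < ybar).
  { destruct (Req_dec T0 0) as [E|NE]. { intros t Ht; lra. }
    assert (Hy0lt : y0 < ybar).
    { destruct (Req_dec y0 ybar) as [E|]; [|lra]. exfalso.
      apply (hT0first 0); [lra|].
      destruct Hph as [E1 [E2 _]]. unfold px, py in E1, E2.
      rewrite (surjective_pairing (phi 0 (x0, y0))), E1, E2.
      unfold inJ; simpl. repeat split; try (unfold inS in HS0; lra).
      rewrite E, hlam_bar in Hx0lam. lra. }
    apply (before beta gamma U HSU' HC1 hA1 xbar ybar Hxb Hyb Hxy Hkey PX PY T0 lp); auto.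
    - rewrite P0y; auto.
    - intros t Ht Hn. destruct (Pd t Ht Hn) as [_ D]. simpl in D. replace (1 - 0) with 1 in D by ring.
      replace (1 * Bf beta (PX t) (PY t)) with (Bf beta (PX t) (PY t)) in D by ring. exact D.
    - intros t Ht [A1 [A2 A3]]. apply (hT0first t Ht).
      unfold PX, PY in *. rewrite !clampE in * by lra. unfold px, py in *.
      assert (HSt := PS t ltac:(lra)). unfold PX, PY in HSt. rewrite !clampE in HSt by lra.
      unfold inJ. auto.
    - intros t Ht [A1 A2]. unfold PX, PY in *. rewrite !clampE in * by lra. unfold px, py in *.
      assert (HG : Gminus phi xbar ybar (x0, y0)).
      { split; [exact HS0|]. exists t. split; auto.
        rewrite (surjective_pairing (phi t (x0, y0))), A1, A2. reflexivity. }
      assert (HCl : closure2 (Gminus phi xbar ybar) (x0, y0)).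
      { intros eps Heps. exists (x0, y0). split; auto. simpl.
        split; rewrite Rminus_diag, Rabs_R0; lra. }
      destruct (proj1 (hlam_clos _) HCl) as [yy [_ Eyy]].
      injection Eyy as E1 E2. subst yy. lra. }
  assert (Eq2 : forall t, T0 <= t <= T1 -> XS t = X t /\ YS t = ybar).
  { apply (uniq beta gamma U HoU HC1 HSU' (fun t => 1 - u t) lx XS YS X (fun _ => ybar) T0 T1); try lra.
    - intros t Ht. destruct (Hrho01 t ltac:(lra)). rewrite Rabs_pos_eq; lra.
    - intros t Ht. apply XSS; lra.
    - intros t _. destruct (XC t). split; auto. split; auto. split.
      + apply deriv_cont. unfold X. auto_derive. auto.
      + apply continuity_pt_const. intros a b; auto.
    - intros t Ht Hn. destruct (Xd t ltac:(lra) Hn) as [D1 D2]. split; auto. split; auto.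
      destruct (HXpos t ltac:(lra)) as [A1 A2].
      assert (Hr := Hrho t ltac:(lra)).
      split.
      + apply is_derive_eq with (v := - (gamma * ybar)).
        { unfold X. auto_derive; auto. ring. }
        rewrite Hr. unfold Bf. field. split; lra.
      + apply is_derive_eq with (v := 0).
        { apply (is_derive_const (K := R_AbsRing) ybar t). }
        rewrite Hr. unfold Bf. field. split; lra.
    - rewrite (proj1 HXT0). unfold X. ring. }
  assert (Haft : forall t, T1 < t -> YS t < ybar).
  { apply (after beta gamma U HSU' HC1 hA1 hbeta_pos xbar ybar Hxb Hyb Hxy Hkey XS YS T1 lx); auto.
    - intros t Ht. apply XSS; lra.
    - destruct (Eq2 T1) as [A1 _]; [lra|]. rewrite A1; auto.
    - apply Eq2; lra.
    - intros t Ht Hn. destruct (Xd t ltac:(lra) Hn) as [D1 D2].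
      rewrite Hu2 in D1, D2 by lra. replace (1 - 0) with 1 in * by ring.
      split; eapply is_derive_eq; eauto; ring. }
  assert (HXS : forall t, 0 <= t -> XS t = xs t) by (intros; unfold XS; apply clampE; auto).
  assert (HYS : forall t, 0 <= t -> YS t = ys t) by (intros; unfold YS; apply clampE; auto).
  assert (Hylt0 : forall t, 0 <= t < T0 -> ys t < ybar).
  { intros t Ht. rewrite <- HYS by lra. rewrite (proj2 (Eq1 t ltac:(lra))). apply Hbef; auto. }
  split; [|split; [|split]].
  - intros t Ht. rewrite <- HXS, <- HYS by lra. apply Eq2; lra.
  - intros t Ht. unfold mu.
    destruct (Rlt_dec t T0) as [H1|H1].
    + rewrite Hu1 by auto. destruct (Rlt_dec (ys t) ybar) as [|Hn]; auto.
      exfalso; apply Hn; apply Hylt0; lra.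
    + destruct (Rlt_dec T1 t) as [H2|H2].
      * rewrite Hu2 by auto. destruct (Rlt_dec (ys t) ybar) as [|Hn]; auto.
        exfalso; apply Hn. rewrite <- HYS by lra. apply Haft; auto.
      * destruct (Eq2 t ltac:(lra)) as [A1 A2]. rewrite HXS in A1 by lra. rewrite HYS in A2 by lra.
        rewrite A1, A2, Hu3 by lra. destruct (Rlt_dec ybar ybar); [lra|].
        unfold posp. rewrite Rmax_left; auto.
        assert (H := Hrho01 t ltac:(lra)). rewrite Hu3 in H by lra. lra.
  - intros t Ht. destruct (Rlt_dec t T0) as [H1|H1]; [left; apply Hylt0; lra|].
    destruct (Rlt_dec T1 t) as [H2|H2]; [left; rewrite <- HYS by lra; apply Haft; auto|].
    right. rewrite <- HYS by lra. apply Eq2; lra.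
  - apply (integ_gen u (fun t => rho gamma beta (X t) ybar) T0 T1); auto; try lra.
    unfold X. 
    apply (is_RInt_ext (fun t => (fun x => rho gamma beta x ybar) (h0 - gamma * ybar * (t - T0)))).
    { intros z _. simpl. f_equal. ring. }
    apply (integ_lin (fun x => rho gamma beta x ybar) T0 T1 h0 xbar (gamma * ybar)); auto.
    apply (ex_RInt_continuous (V := R_CompleteNormedModule)). intros z Hz.
    rewrite Rmin_left, Rmax_right in Hz by lra.
    assert (HSz : inS z ybar) by (unfold inS in *; lra).
    apply (proj1 (continuity_pt_filterlim _ _)).
    unfold rho.
    destruct (HC1 (z, ybar) (HSU' _ _ HSz)) as [_ [Hex _]]. simpl in Hex.
    assert (Hbz := hbeta_pos _ _ HSz).
    apply (continuity_pt_minus (fun _ => 1) (fun z => gamma / (z * beta z ybar))).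
    apply continuity_pt_const; intros a b; auto.
    apply (continuity_pt_div (fun _ => gamma) (fun z => z * beta z ybar)).
    apply continuity_pt_const; intros a b; auto.
    apply (continuity_pt_mult (fun z => z) (fun z => beta z ybar)).
    apply continuity_pt_id. apply deriv_cont; auto.
    assert (0 < z * beta z ybar) by (apply Rmult_lt_0_compat; lra). lra.
Qed.
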